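(* Let $P$ be a finite poset with $P \in \mathcal{N}_2$. Then every convex subposet $Q$ of $P$ (a subset $Q\subseteq P$ such that $x\le z\le y$ with $x,y\in Q$ implies $z\in Q$, with the induced order) also belongs to $\mathcal{N}_2$.
   Context: All posets are finite. An edge of a poset is a covering relation $x \lessdot y$. A chain cover of a poset $P$ is a set of pairwise disjoint saturated chains whose union is $P$. A labeling of $P$ is a map $\lambda:P\to\mathbb{R}$. For a chain cover $\mathcal{C}$, $\mathcal{C}$-sorting a labeling means: for each chain $\bm{c}\in\mathcal{C}$, permute the labels $\{\lambda(v): v\in \bm{c}\}$ among the elements of $\bm{c}$ so that they are non-decreasing from the minimum of $\bm{c}$ to its maximum. A finite poset $P$ has the non-messing-up property, written $P\in\mathcal{N}_2$ (via $\{\mathcal{C}_1,\mathcal{C}_2\}$), if there exists an unordered pair of chain covers $\{\mathcal{C}_1,\mathcal{C}_2\}$ of $P$ such that (1) for every labeling of $P$ and for $i=1$ and $i=2$, first $\mathcal{C}_i$-sorting and then $\mathcal{C}_{3-i}$-sorting leaves the labels non-decreasing along every chain of $\mathcal{C}_i$; and (2) every edge of $P$ is contained in some chain of $\mathcal{C}_1$ or of $\mathcal{C}_2$. *)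

(* Defs.v *)
From HB Require Import structures.
From mathcomp Require Import all_boot all_order all_algebra.
From mathcomp Require Import Rstruct.
From Stdlib Require Rdefinitions.
Notation R := Rdefinitions.R.
Set Implicit Arguments. Unset Strict Implicit. Unset Printing Implicit Defensive.
Import Order.TTheory GRing.Theory Num.Theory.

Section N2.
Context {d : Order.disp_t} {T : finPOrderType d}.

(* A (sub)poset is a set A : {set T} with the order induced from T. *)

Definition covers_in (A : {set T}) (x y : T) : bool :=
  [&& x \in A, y \in A, (x < y)%O &
      ~~ [exists z in A, (x < z)%O && (z < y)%O]].

Definition saturated_chain (A : {set T}) (c : seq T) : bool :=
  (c != [::]) && all (mem A) c && sorted (covers_in A) c.

(* a chain cover: pairwise disjoint saturated chains whose union is A
   (disjointness and covering: every element of A occurs exactly once) *)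
Definition chain_cover (A : {set T}) (C : seq (seq T)) : bool :=
  all (saturated_chain A) C && perm_eq (flatten C) (enum A).

Definition sort_chain (lam : T -> R) (c : seq T) : T -> R :=
  fun v => if v \in c
           then nth 0%R (sort (fun a b : R => (a <= b)%R) [seq lam u | u <- c]) (index v c)
           else lam v.

Definition csort (C : seq (seq T)) (lam : T -> R) : T -> R :=
  foldl sort_chain lam C.

Definition chain_sorted (lam : T -> R) (c : seq T) : bool :=
  sorted (fun a b : R => (a <= b)%R) [seq lam u | u <- c].

Definition non_messing_pair (A : {set T}) (C1 C2 : seq (seq T)) : Prop :=
  chain_cover A C1 /\ chain_cover A C2 /\
  (forall lam : T -> R,
      all (chain_sorted (csort C2 (csort C1 lam))) C1 /\
      all (chain_sorted (csort C1 (csort C2 lam))) C2) /\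
  (forall x y : T, covers_in A x y ->
      has (fun c => (x \in c) && (y \in c)) (C1 ++ C2)).

Definition N2 (A : {set T}) : Prop :=
  exists C1 C2 : seq (seq T), non_messing_pair A C1 C2.

Definition convex (Q : {set T}) : Prop :=
  forall x y z : T, x \in Q -> y \in Q -> (x <= z)%O -> (z <= y)%O -> z \in Q.

End N2.

(* Main.v *)
Require Import Defs.
From HB Require Import structures.
From mathcomp Require Import all_boot all_order all_algebra.
From mathcomp Require Import Rstruct.
Import Order.TTheory GRing.Theory Num.Theory.
Set Implicit Arguments. Unset Strict Implicit. Unset Printing Implicit Defensive.

Lemma filter_none (X : Type) (a : pred X) (s : seq X) :
  all (fun y => ~~ a y) s -> filter a s = [::].
Proof. by elim: s => //= x s IH /andP[/negbTE -> /IH]. Qed.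

Lemma map_constant (X Y : eqType) (f : X -> Y) (y : Y) (s : seq X) :
  {in s, forall x, f x = y} -> map f s = nseq (size s) y.
Proof.
elim: s => //= x s IH H; rewrite H ?mem_head // IH // => z zs.
by apply: H; rewrite in_cons zs orbT.
Qed.

Lemma pairwise_nseq (X : Type) (r : rel X) (x : X) n :
  r x x -> pairwise r (nseq n x).
Proof.
move=> rxx; elim: n => //= n ->; rewrite andbT.
by elim: n => //= n ->; rewrite rxx.
Qed.

Lemma flatten_nonempty (X : eqType) (L : seq (seq X)) :
  flatten [seq s <- L | s != [::]] = flatten L.
Proof. by elim: L => //= -[|x s] L IH //=; rewrite IH. Qed.

Lemma split3 (X : Type) (k : X -> nat) (s : seq X) :
  all (fun v => k v <= 2) s -> sorted (fun x y => k x <= k y) s ->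
  s = [seq v <- s | k v == 0] ++ [seq v <- s | k v == 1] ++ [seq v <- s | k v == 2].
Proof.
elim: s => //= x s IH /andP[kx2 H2] Hp.
have Hs := path_sorted Hp.
have Hm : all (fun y => k x <= k y) s.
  by apply: (order_path_min _ Hp) => a b c; apply: leq_trans.
rewrite {1}(IH H2 Hs).
case: (k x) kx2 Hm => [|[|[|//]]] _ Hm //=.
- rewrite (@filter_none _ (fun v => k v == 0)) //.
  by apply: sub_all Hm => y /=; case: (k y).
- rewrite (@filter_none _ (fun v => k v == 0)) ?(@filter_none _ (fun v => k v == 1)) //.
  + by apply: sub_all Hm => y /=; case: (k y) => [|[]].
  + by apply: sub_all Hm => y /=; case: (k y) => [|[]].
Qed.

Section Main.
Context {d : Order.disp_t} {T : finPOrderType d} (Q : {set T}).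
Hypothesis convQ : convex Q.

Local Notation e := (covers_in [set: T]).

Lemma cov_lt x y : e x y -> (x < y)%O.
Proof. by case/and4P. Qed.

Lemma lt_trans' : transitive (fun x y : T => (x < y)%O).
Proof. by move=> a b c; apply: lt_trans. Qed.

Lemma covQ_cov x y : covers_in Q x y -> e x y.
Proof.
case/and4P=> xQ yQ xy /existsP H; apply/and4P; split; rewrite ?in_setT //.
apply/existsP=> -[z /and3P[_ xz zy]]; apply: H; exists z.
by rewrite xz zy (convQ xQ yQ (ltW xz) (ltW zy)).
Qed.

Definition restr (c : seq T) := [seq v <- c | v \in Q].

Lemma path_restr x c : x \in Q -> path e x c -> path (covers_in Q) x (restr c).
Proof.
elim: c x => //= y c IH x xQ /andP[exy Hp].
case: ifP => yQ.
  rewrite /= IH // andbT; case/and4P: exy => _ _ xy /existsP H.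
  apply/and4P; split=> //; apply/existsP=> -[z /and3P[_ xz zy]]; apply: H.
  by exists z; rewrite xz zy in_setT.
have Hlt : path (fun a b : T => (a < b)%O) y c by apply: sub_path Hp => a b; apply: cov_lt.
have Hall := order_path_min lt_trans' Hlt.
rewrite /restr filter_none //; apply: sub_all Hall => z yz; apply/negP => zQ.
by move: yQ; rewrite (convQ xQ zQ (ltW (cov_lt exy)) (ltW yz)).
Qed.

Lemma sorted_restr c : sorted e c -> sorted (covers_in Q) (restr c).
Proof.
elim: c => //= x c IH Hp; case: ifP => xQ.
  by apply: path_restr.
by apply: IH; apply: path_sorted Hp.
Qed.

Definition k (v : T) : nat :=
  if v \in Q then 1 else if [exists q in Q, (v < q)%O] then 0 else 2.

Lemma k_le2 v : k v <= 2.
Proof. by rewrite /k; case: ifP => //; case: ifP. Qed.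

Lemma k1 v : (k v == 1) = (v \in Q).
Proof. by rewrite /k; case: ifP => //; case: ifP. Qed.

Lemma k_mono x y : (x < y)%O -> k x <= k y.
Proof.
move=> xy; rewrite /k.
case: ifPn => xQ.
  case: ifPn => // yQ; case: ifPn => // /existsP[q /andP[qQ yq]].
  by move: yQ; rewrite (convQ xQ qQ (ltW xy) (ltW yq)).
case: ifPn => [/existsP[q /andP[qQ xq]]|nx]; first by case: ifP => //; case: ifP.
case: ifPn => yQ.
  by case/existsP: nx; exists y; rewrite yQ xy.
case: ifPn => // /existsP[q /andP[qQ yq]].
by case/existsP: nx; exists q; rewrite qQ (lt_trans xy yq).
Qed.

Lemma chain_split c : sorted e c ->
  c = [seq v <- c | k v == 0] ++ restr c ++ [seq v <- c | k v == 2].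
Proof.
move=> Hs; rewrite {1}(@split3 _ k c); last first.
- by apply: sub_sorted Hs => a b /cov_lt; apply: k_mono.
- by apply/allP => v _; apply: k_le2.
by rewrite /restr (eq_filter k1).
Qed.


Definition Rel (M : R) (mu nu : T -> R) := forall v,
  [/\ k v = 0 -> mu v = (- M)%R, k v = 2 -> mu v = M &
      v \in Q -> mu v = nu v /\ (- M <= mu v <= M)%R].

Lemma core M mu nu c : (0 <= M)%R -> sorted e c -> Rel M mu nu ->
  Rel M (sort_chain mu c) (sort_chain nu (restr c)).
Proof.
move=> M0 Hs HR.
have Ec := chain_split Hs.
set c0 := [seq v <- c | k v == 0] in Ec.
set c2 := [seq v <- c | k v == 2] in Ec.
set c1 := restr c in Ec *.
set le := (fun a b : R => (a <= b)%R).
have Hmap : map mu c = nseq (size c0) (- M)%R ++ map mu c1 ++ nseq (size c2) M.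
  rewrite {1}Ec !map_cat (@map_constant _ _ _ (- M)%R c0) ?(@map_constant _ _ _ M c2) //.
    by move=> x; rewrite mem_filter => /andP[/eqP kx _]; case: (HR x) => _ -> .
  by move=> x; rewrite mem_filter => /andP[/eqP kx _]; case: (HR x) => -> .
have Hb : forall x, x \in sort le (map mu c1) -> (- M <= x <= M)%R.
  move=> x; rewrite mem_sort => /mapP[u]; rewrite mem_filter => /andP[uQ _] ->.
  by case: (HR u) => _ _ /(_ uQ) [].
have Hsort : sort le (map mu c) =
    nseq (size c0) (- M)%R ++ sort le (map mu c1) ++ nseq (size c2) M.
  apply: (sorted_eq le_trans le_anti).
  - exact: (sort_sorted le_total).
  - rewrite (sorted_pairwise le_trans) !pairwise_cat !pairwise_nseq ?lexx //.
    rewrite -(sorted_pairwise le_trans) (sort_sorted le_total) !andbT.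
    apply/and3P; split => //.
    + rewrite /allrel; apply/allP => x; rewrite mem_nseq => /andP[_ /eqP ->]; apply/allP => y.
      rewrite mem_cat mem_nseq => /orP[/Hb /andP[]//|/andP[_ /eqP ->]].
      by rewrite /le -subr_ge0 opprK addr_ge0.
    + rewrite /allrel; apply/allP => x /Hb /andP[_ xM]; apply/allP => y; rewrite mem_nseq => /andP[_ /eqP ->] //.
  - by rewrite perm_sort Hmap perm_cat2l perm_cat2r perm_sym perm_sort.
move=> v; rewrite /sort_chain.
have Ei : index v c = index v (c0 ++ c1 ++ c2) by rewrite {1}Ec.
have c1c : (v \in c1) = (v \in Q) && (v \in c) by rewrite mem_filter.
have s1 : size (sort le (map mu c1)) = size c1 by rewrite size_sort size_map.
case Hv : (v \in c); last first.
  rewrite c1c Hv andbF; case: (HR v) => A B C; split=> //.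
split.
- move=> kv; rewrite Ei index_cat.
  have -> : v \in c0 by rewrite mem_filter kv eqxx Hv.
  by rewrite Hsort nth_cat size_nseq index_mem mem_filter kv eqxx Hv nth_nseq index_mem mem_filter kv eqxx Hv.
- move=> kv; rewrite Ei !index_cat.
  have -> : v \in c0 = false by rewrite mem_filter kv.
  have -> : v \in c1 = false by rewrite c1c -k1 kv.
  have vc2 : v \in c2 by rewrite mem_filter kv eqxx Hv.
  rewrite Hsort nth_cat size_nseq ltnNge leq_addr /= addKn nth_cat s1 ltnNge leq_addr /=.
  by rewrite addKn nth_nseq index_mem vc2.
- move=> vQ; rewrite Ei index_cat.
  have -> : v \in c0 = false by rewrite mem_filter; move: vQ; rewrite -k1 => /eqP ->.
  have vc1 : v \in c1 by rewrite c1c vQ Hv.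
  rewrite index_cat vc1 Hsort nth_cat size_nseq ltnNge leq_addr /= addKn.
  rewrite nth_cat s1 index_mem vc1.
  have -> : map nu c1 = map mu c1.
    by apply/eq_in_map => u; rewrite mem_filter => /andP[uQ _]; case: (HR u) => _ _ /(_ uQ) [->].
  split=> //; apply: Hb; apply: mem_nth; rewrite s1 index_mem //.
Qed.


Definition restrC (C : seq (seq T)) := [seq s <- map restr C | s != [::]].

Lemma csort_rel M C mu nu : (0 <= M)%R -> all (sorted e) C -> Rel M mu nu ->
  Rel M (csort C mu) (csort (restrC C) nu).
Proof.
rewrite /csort /restrC; elim: C mu nu => //= c C IH mu nu M0 /andP[sc sC] HR.
case: ifP => h /=.
  by apply: IH => //; apply: core.
apply: IH => //; have := core M0 sc HR.
move/negbFE/eqP: h => -> H v; case: (H v) => A B C'; split => // /C'.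
Qed.

Lemma sorted_final M mu nu C : Rel M mu nu -> all (chain_sorted mu) C ->
  all (chain_sorted nu) (restrC C).
Proof.
move=> HR /allP H; apply/allP => s; rewrite mem_filter => /andP[_ /mapP[c cC ->]].
rewrite /chain_sorted.
have -> : map nu (restr c) = map mu (restr c).
  by apply/eq_in_map => u; rewrite mem_filter => /andP[uQ _]; case: (HR u) => _ _ /(_ uQ) [->].
apply: (subseq_sorted le_trans _ (H c cC)).
by apply: map_subseq; apply: filter_subseq.
Qed.

Lemma cover_restr C : chain_cover [set: T] C -> chain_cover Q (restrC C).
Proof.
rewrite /chain_cover => /andP[Hs Hp]; apply/andP; split.
  apply/allP => s; rewrite mem_filter => /andP[sne /mapP[c cC Ec]].
  have := allP Hs c cC; rewrite /saturated_chain => /andP[_ sc].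
  rewrite sne /=; apply/andP; split.
    by apply/allP => v; rewrite Ec mem_filter => /andP[vQ _].
  by rewrite Ec; apply: sorted_restr.
rewrite flatten_nonempty.
have -> : flatten (map restr C) = [seq v <- flatten C | v \in Q] by rewrite filter_flatten.
apply: perm_trans (perm_filter _ Hp) _; apply: uniq_perm.
- by apply: filter_uniq; apply: enum_uniq.
- by apply: enum_uniq.
by move=> x; rewrite mem_filter !mem_enum in_setT andbT.
Qed.

Lemma has_restr C x y : x \in Q -> y \in Q ->
  has (fun c => (x \in c) && (y \in c)) C ->
  has (fun c => (x \in c) && (y \in c)) (restrC C).
Proof.
move=> xQ yQ /hasP[c cC /andP[xc yc]]; apply/hasP; exists (restr c).
  rewrite mem_filter map_f // andbT; apply/eqP => h.
  have xr : x \in restr c by rewrite mem_filter xQ.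
  by rewrite h in xr.
by rewrite !mem_filter xQ yQ xc yc.
Qed.

End Main.

Theorem theorem2p1 (d : Order.disp_t) (T : finPOrderType d) (Q : {set T}) :
  N2 [set: T] -> convex Q -> N2 Q.
Proof.
move=> [C1 [C2 [cc1 [cc2 [Hl He]]]]] convQ.
exists (restrC Q C1), (restrC Q C2); split; [|split; [|split]].
- exact: cover_restr.
- exact: cover_restr.
- move=> lam.
  pose M := (\sum_(q in Q) `|lam q|)%R.
  have M0 : (0 <= M)%R by apply: sumr_ge0 => i _; apply: normr_ge0.
  pose ext := fun v => if v \in Q then lam v else if k Q v == 0 then (- M)%R else M.
  have R0 : Rel Q M ext lam.
    move=> v; rewrite /ext; split.
    + by move=> kv; rewrite -(k1 Q) kv.
    + by move=> kv; rewrite -(k1 Q) kv.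
    + move=> vQ; rewrite vQ; split => //; rewrite -ler_norml.
      rewrite /M (bigD1 v) //= lerDl; apply: sumr_ge0 => i _; apply: normr_ge0.
  have sC1 : all (sorted (covers_in [set: T])) C1.
    by case/andP: cc1 => /allP H _; apply/allP => c /H /andP[].
  have sC2 : all (sorted (covers_in [set: T])) C2.
    by case/andP: cc2 => /allP H _; apply/allP => c /H /andP[].
  have R12 := csort_rel convQ M0 sC2 (csort_rel convQ M0 sC1 R0).
  have R21 := csort_rel convQ M0 sC1 (csort_rel convQ M0 sC2 R0).
  case: (Hl ext) => H1 H2; split.
    exact: sorted_final R12 H1.
  exact: sorted_final R21 H2.
- move=> x y cQ; have exy := covQ_cov convQ cQ.
  case/and4P: cQ => xQ yQ _ _.
  have := He x y exy; rewrite !has_cat => /orP[h|h]; apply/orP; [left|right];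
  exact: has_restr.
Qed.
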